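(* Let $0<c<1$. There exists a set $A\subseteq\mathbb{N}$ such that $R_A(n)=cn+O(\sqrt{n}\log^{1/2}n)$ as $n\to\infty$.
   Context: $\mathbb{N}$ denotes the set of non-negative integers. For $A\subseteq\mathbb{N}$, $R_A(n)$ denotes the number of ordered pairs $(a,a')$ with $a,a'\in A$ and $a+a'=n$. *)

(* Defs.v *)
From Stdlib Require Import Reals Lra Lia List.
Open Scope R_scope.

(* R_A(n) = number of ordered pairs (a, a') with a, a' in A and a + a' = n;
   such a pair is determined by a in {0,...,n} with a' = n - a. *)
Definition RA (A : nat -> bool) (n : nat) : nat :=
  length (filter (fun a => andb (A a) (A (n - a)%nat)) (seq 0 (S n))).

(* Main.v *)
Require Import Defs.
From Stdlib Require Import Reals Lra Lia List FunctionalExtensionality Classical ClassicalEpsilon Arith.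
Open Scope R_scope.

Definition upd (x : nat -> bool) (a : nat) (b : bool) : nat -> bool :=
  fun i => if Nat.eqb i a then b else x i.

Lemma upd_eq x a b : upd x a b a = b.
Proof. unfold upd; now rewrite Nat.eqb_refl. Qed.

Lemma upd_neq x a b i : i <> a -> upd x a b i = x i.
Proof. intros H; unfold upd; destruct (Nat.eqb_spec i a); congruence. Qed.

Lemma upd_comm x a b a' b' : a <> a' -> upd (upd x a b) a' b' = upd (upd x a' b') a b.
Proof.
  intros H; apply functional_extensionality; intros i; unfold upd.
  destruct (Nat.eqb_spec i a'), (Nat.eqb_spec i a); subst; try congruence.
Qed.

Fixpoint E (p : R) (k : nat) (F : (nat -> bool) -> R) : R :=
  match k with
  | O => F (fun _ => false)
  | S k' => p * E p k' (fun x => F (upd x k' true))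
            + (1 - p) * E p k' (fun x => F (upd x k' false))
  end.

Section Ex.
Variable p : R.

Lemma E_ext k F G : (forall x, F x = G x) -> E p k F = E p k G.
Proof.
  revert F G; induction k as [|k IH]; intros F G H; simpl; [apply H|].
  f_equal; f_equal; apply IH; intros; apply H.
Qed.

Lemma E_add k F G : E p k (fun x => F x + G x) = E p k F + E p k G.
Proof.
  revert F G; induction k as [|k IH]; intros F G; simpl; [reflexivity|].
  rewrite (IH (fun x => F (upd x k true))), (IH (fun x => F (upd x k false))); ring.
Qed.

Lemma E_scalr k F r : E p k (fun x => F x * r) = E p k F * r.
Proof.
  revert F; induction k as [|k IH]; intros F; simpl; [reflexivity|].
  rewrite (IH (fun x => F (upd x k true))), (IH (fun x => F (upd x k false))); ring.
Qed.

Lemma E_const k r : E p k (fun _ => r) = r.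
Proof.
  induction k as [|k IH]; simpl; [reflexivity|]. rewrite IH; ring.
Qed.

Hypothesis hp : 0 <= p <= 1.

Lemma E_mono k F G : (forall x, F x <= G x) -> E p k F <= E p k G.
Proof.
  revert F G; induction k as [|k IH]; intros F G H; simpl; [apply H|].
  pose proof (IH (fun x => F (upd x k true)) (fun x => G (upd x k true)) (fun x => H _)).
  pose proof (IH (fun x => F (upd x k false)) (fun x => G (upd x k false)) (fun x => H _)).
  nra.
Qed.

Lemma E_ge k F r : (forall x, r <= F x) -> r <= E p k F.
Proof.
  intros H. rewrite <- (E_const k r) at 1. apply E_mono; auto.
Qed.

Definition indep (F : (nat -> bool) -> R) a := forall x b, F (upd x a b) = F x.

Lemma E_indep1 k F a (g : bool -> R) : (a < k)%nat -> indep F a ->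
  E p k (fun x => F x * g (x a)) = E p k F * (p * g true + (1 - p) * g false).
Proof.
  revert F; induction k as [|k IH]; intros F Ha HF; [lia|]. simpl.
  destruct (Nat.eq_dec a k) as [->|Hne].
  - rewrite (E_ext k _ (fun x => F x * g true)).
    2:{ intros x; rewrite upd_eq, HF; reflexivity. }
    rewrite (E_ext k (fun x => F (upd x k false) * _) (fun x => F x * g false)).
    2:{ intros x; rewrite upd_eq, HF; reflexivity. }
    rewrite (E_ext k (fun x => F (upd x k true)) F) by (intros; apply HF).
    rewrite (E_ext k (fun x => F (upd x k false)) F) by (intros; apply HF).
    rewrite !E_scalr; ring.
  - assert (Hak : (a < k)%nat) by lia.
    rewrite (E_ext k _ (fun x => F (upd x k true) * g (x a))).
    2:{ intros x; rewrite upd_neq by auto; reflexivity. }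
    rewrite (E_ext k (fun x => F (upd x k false) * _) (fun x => F (upd x k false) * g (x a))).
    2:{ intros x; rewrite upd_neq by auto; reflexivity. }
    rewrite (IH (fun x => F (upd x k true))), (IH (fun x => F (upd x k false))); auto;
      try (intros x b; rewrite upd_comm by auto; apply HF).
    ring.
Qed.

Definition v (b : bool) : R := if b then 1 else 0.

Lemma E_indep2 k F a b (g : bool -> R) : (a < k)%nat -> (b < k)%nat -> a <> b ->
  indep F a -> indep F b ->
  E p k (fun x => F x * g (x a && x b)%bool) = E p k F * (p * p * g true + (1 - p * p) * g false).
Proof.
  intros Ha Hb Hab HFa HFb.
  rewrite (E_ext k _ (fun x => (F x * v (x b)) * g (x a) + (F x * (fun bb => 1 - v bb) (x b)) * g false)).
  2:{ intros x; destruct (x a), (x b); simpl; unfold v; ring. }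
  rewrite E_add, E_indep1; auto.
  2:{ intros x bb; rewrite HFa, upd_neq; auto. }
  rewrite E_scalr, E_indep1, (E_indep1 k F b (fun bb => 1 - v bb)); auto. simpl. ring.
Qed.

End Ex.

Fixpoint sum (f : nat -> R) (m : nat) : R :=
  match m with O => 0 | S m' => sum f m' + f m' end.

Lemma sum_ext f g m : (forall i, (i < m)%nat -> f i = g i) -> sum f m = sum g m.
Proof.
  induction m as [|m IH]; intros H; simpl; auto.
  rewrite IH by (intros; apply H; lia). rewrite H by lia. reflexivity.
Qed.

Lemma sum_le f g m : (forall i, (i < m)%nat -> f i <= g i) -> sum f m <= sum g m.
Proof.
  induction m as [|m IH]; intros H; simpl; [lra|].
  pose proof (IH (fun i Hi => H i ltac:(lia))). pose proof (H m ltac:(lia)). lra.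
Qed.

Lemma sum_shift f m : sum f (S m) = f O + sum (fun i => f (S i)) m.
Proof.
  induction m as [|m IH]; simpl in *; [ring|]. rewrite IH. ring.
Qed.

Lemma sum_split f a b : sum f (a + b) = sum f a + sum (fun i => f (a + i)%nat) b.
Proof.
  induction b as [|b IH]; simpl; [rewrite Nat.add_0_r; ring|].
  rewrite Nat.add_succ_r; simpl; rewrite IH; ring.
Qed.

Lemma sum_rev f m : sum f m = sum (fun i => f (m - 1 - i)%nat) m.
Proof.
  induction m as [|m IH]; [reflexivity|].
  rewrite (sum_shift (fun i => f (S m - 1 - i)%nat)). change (sum f (S m)) with (sum f m + f m). rewrite IH.
  replace (S m - 1 - 0)%nat with m by lia.
  rewrite (sum_ext (fun i => f (S m - 1 - S i)%nat) (fun i => f (m - 1 - i)%nat)).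
  2:{ intros i Hi; f_equal; lia. }
  ring.
Qed.

Lemma sum_nonneg f m : (forall i, (i < m)%nat -> 0 <= f i) -> 0 <= sum f m.
Proof.
  intros H. apply Rle_trans with (sum (fun _ => 0) m).
  - clear H; induction m; simpl; lra.
  - apply sum_le; auto.
Qed.

Lemma sum_ge_term f m i : (forall j, (j < m)%nat -> 0 <= f j) -> (i < m)%nat -> f i <= sum f m.
Proof.
  induction m as [|m IH]; intros H Hi; [lia|]. simpl.
  destruct (Nat.eq_dec i m) as [->|Hne].
  - pose proof (sum_nonneg f m (fun j Hj => H j ltac:(lia))). lra.
  - pose proof (IH (fun j Hj => H j ltac:(lia)) ltac:(lia)). pose proof (H m ltac:(lia)). lra.
Qed.

Lemma E_sum p k (G : nat -> (nat -> bool) -> R) m :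
  E p k (fun x => sum (fun n => G n x) m) = sum (fun n => E p k (G n)) m.
Proof.
  induction m as [|m IH]; simpl; [apply E_const|].
  rewrite E_add, IH; reflexivity.
Qed.

Lemma len_filter_sum f s m :
  INR (length (filter f (seq s m))) = sum (fun i => v (f (s + i)%nat)) m.
Proof.
  revert s; induction m as [|m IH]; intros s; [reflexivity|].
  rewrite sum_shift. simpl seq. simpl filter.
  rewrite (sum_ext _ (fun i => v (f (S s + i)%nat))) by (intros; f_equal; f_equal; lia).
  rewrite <- IH, Nat.add_0_r.
  destruct (f s); simpl length; [rewrite S_INR|]; simpl v; ring.
Qed.

Definition t_ (x : nat -> bool) n i := v (x i && x (n - i)%nat)%bool.

Lemma RA_sum x n : INR (RA x n) = sum (t_ x n) (S n).
Proof.
  unfold RA. rewrite len_filter_sum. apply sum_ext; intros; reflexivity.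
Qed.

Lemma RA_pair x n h : (2 * h <= S n <= 2 * h + 1)%nat ->
  2 * sum (t_ x n) h <= INR (RA x n) <= 2 * sum (t_ x n) h + 1.
Proof.
  intros Hh. rewrite RA_sum.
  replace (S n) with (h + (S n - h))%nat by lia.
  rewrite sum_split, (sum_rev (fun i => t_ x n (h + i)%nat)).
  rewrite (sum_ext (fun i => t_ x n (h + (S n - h - 1 - i))%nat) (t_ x n)).
  2:{ intros i Hi. unfold t_. replace (n - (h + (S n - h - 1 - i)))%nat with i by lia.
      replace (h + (S n - h - 1 - i))%nat with (n - i)%nat by lia.
      destruct (x i), (x (n - i)%nat); reflexivity. }
  assert (Ht : 0 <= t_ x n h <= 1) by (unfold t_, v; destruct (_ && _)%bool; lra).
  destruct (Nat.eq_dec (S n - h) h) as [->|Hne].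
  - lra.
  - replace (S n - h)%nat with (S h) by lia. simpl. lra.
Qed.

Lemma exp_quad m : -1/2 <= m <= 1/2 -> exp m <= 1 + m + 2 * m * m.
Proof.
  intros Hm. pose proof (exp_ineq1_le (- m)) as H1.
  assert (H2 : exp m * exp (- m) = 1) by (rewrite <- exp_plus, Rplus_opp_r, exp_0; reflexivity).
  pose proof (exp_pos m).
  assert (H3 : exp m * (1 - m) <= 1) by nra.
  assert (H4 : 1 <= (1 + m + 2 * m * m) * (1 - m)) by nra.
  nra.
Qed.

Section Mgf.
Variable p : R.
Hypothesis hp : 0 <= p <= 1.

Lemma mgf_bound m : -1/2 <= m <= 1/2 ->
  p * p * exp m + (1 - p * p) * exp 0 <= exp (p * p * m + 2 * m * m).
Proof.
  intros Hm. rewrite exp_0. pose proof (exp_quad m Hm).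
  pose proof (exp_ineq1_le (p * p * m + 2 * m * m)).
  assert (0 <= p * p <= 1) by nra.
  nra.
Qed.

Lemma mgf k n h j m : (n < k)%nat -> (2 * h <= S n)%nat -> (j <= h)%nat -> -1/2 <= m <= 1/2 ->
  E p k (fun x => exp (m * sum (t_ x n) j)) <= exp (INR j * (p * p * m + 2 * m * m)).
Proof.
  intros Hn Hh Hj Hm. induction j as [|j IH].
  - simpl. rewrite Rmult_0_r, Rmult_0_l, E_const. lra.
  - set (g := fun bb => exp (m * v bb)).
    rewrite (E_ext p k _ (fun x => exp (m * sum (t_ x n) j) * g (x j && x (n - j)%nat)%bool)).
    2:{ intros x; simpl; unfold g; rewrite <- exp_plus; f_equal; unfold t_; ring. }
    rewrite E_indep2; auto; try lia.
    + unfold g; simpl v. rewrite Rmult_1_r, Rmult_0_r.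
      rewrite S_INR, Rmult_plus_distr_r, Rmult_1_l, exp_plus.
      apply Rmult_le_compat.
      * apply E_ge; auto. intros; left; apply exp_pos.
      * pose proof (exp_pos m); pose proof (exp_pos 0); assert (0 <= p * p <= 1) by nra; nra.
      * apply IH; lia.
      * apply mgf_bound; auto.
    + intros x b. f_equal. f_equal. apply sum_ext; intros i Hi. unfold t_.
      rewrite !upd_neq by lia. reflexivity.
    + intros x b. f_equal. f_equal. apply sum_ext; intros i Hi. unfold t_.
      rewrite !upd_neq by lia. reflexivity.
Qed.

End Mgf.

Lemma Rdiv_le_0_compat a b : 0 <= a -> 0 < b -> 0 <= a / b.
Proof. intros; unfold Rdiv; apply Rmult_le_pos; [auto|left; apply Rinv_0_lt_compat; auto]. Qed.

Definition hh n := Nat.div2 (S n).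

Lemma hh_spec n : (2 * hh n <= S n <= 2 * hh n + 1)%nat.
Proof.
  unfold hh. pose proof (Nat.div2_odd (S n)). destruct (Nat.odd (S n)); simpl in *; lia.
Qed.

Definition lam n := sqrt (ln (INR n) / INR (hh n)).
Definition tt n := 4 * INR (hh n) * lam n.

Definition Fb p n x :=
  if Rle_dec (lam n) (1/2) then
    exp (lam n * (sum (t_ x n) (hh n) - p * p * INR (hh n) - tt n))
    + exp (lam n * (p * p * INR (hh n) - tt n - sum (t_ x n) (hh n)))
  else 0.

Lemma exp_m2ln y : 0 < y -> exp (-2 * ln y) = 2 / (y * y) / 2.
Proof.
  intros Hy. replace (-2 * ln y) with (- (ln y + ln y)) by ring.
  rewrite exp_Ropp, exp_plus, exp_ln by auto. field. lra.
Qed.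

Lemma facts n : (4 <= n)%nat ->
  4 <= INR n /\ 1 < ln (INR n) /\ 2 <= INR (hh n) /\ INR (hh n) <= INR n /\
  0 < lam n /\ lam n * lam n * INR (hh n) = ln (INR n) /\
  2 * INR (hh n) <= INR n + 1 <= 2 * INR (hh n) + 1.
Proof.
  intros Hn. pose proof (hh_spec n) as Hh.
  assert (H4 : 4 <= INR n) by (replace 4 with (INR 4) by (simpl; ring); apply le_INR; auto).
  assert (Hln : 1 < ln (INR n)).
  { rewrite <- (ln_exp 1) at 1. apply ln_increasing. apply exp_pos.
    pose proof exp_le_3. lra. }
  assert (H2 : 2 <= INR (hh n)) by (replace 2 with (INR 2) by (simpl; ring); apply le_INR; lia).
  assert (Hhn : INR (hh n) <= INR n) by (apply le_INR; lia).
  assert (Hl2 : lam n * lam n = ln (INR n) / INR (hh n)).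
  { unfold lam. apply sqrt_sqrt. apply Rdiv_le_0_compat; lra. }
  assert (HR : 2 * INR (hh n) <= INR n + 1 <= 2 * INR (hh n) + 1).
  { destruct Hh as [Ha Hb]. apply le_INR in Ha, Hb.
    rewrite mult_INR, (S_INR n) in Ha; rewrite plus_INR, mult_INR, (S_INR n) in Hb.
    replace (INR 2) with 2 in Ha, Hb by (simpl; ring). replace (INR 1) with 1 in Hb by (simpl; ring). lra. }
  repeat split; try lra.
  - unfold lam. apply sqrt_lt_R0. apply Rdiv_lt_0_compat; lra.
  - rewrite Hl2. field. lra.
Qed.

Section Main.
Variable p : R.
Hypothesis hp : 0 <= p <= 1.

Lemma EFb k n : (4 <= n)%nat -> (n < k)%nat -> E p k (Fb p n) <= 2 / (INR n * INR n).
Proof.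
  intros Hn Hk. destruct (facts n Hn) as (H4 & Hln & H2 & Hhn & Hl & Hll & HR).
  pose proof (hh_spec n). unfold Fb. destruct (Rle_dec (lam n) (1/2)) as [Hle|Hgt].
  - rewrite E_add.
    set (l := lam n) in *. set (h := INR (hh n)) in *.
    rewrite (E_ext p k _ (fun x => exp (l * sum (t_ x n) (hh n)) * exp (- (l * (p * p * h + tt n))))).
    2:{ intros; rewrite <- exp_plus; f_equal; ring. }
    rewrite (E_ext p k (fun x => exp (l * (p * p * h - tt n - _)))
               (fun x => exp ((- l) * sum (t_ x n) (hh n)) * exp (l * (p * p * h - tt n)))).
    2:{ intros; rewrite <- exp_plus; f_equal; ring. }
    rewrite !E_scalr.
    pose proof (mgf p hp k n (hh n) (hh n) l Hk ltac:(lia) ltac:(lia) ltac:(lra)) as M1.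
    pose proof (mgf p hp k n (hh n) (hh n) (- l) Hk ltac:(lia) ltac:(lia) ltac:(lra)) as M2.
    fold h in M1, M2.
    pose proof (exp_pos (- (l * (p * p * h + tt n)))).
    pose proof (exp_pos (l * (p * p * h - tt n))).
    apply Rle_trans with (exp (h * (p * p * l + 2 * l * l)) * exp (- (l * (p * p * h + tt n)))
                         + exp (h * (p * p * - l + 2 * - l * - l)) * exp (l * (p * p * h - tt n))).
    { apply Rplus_le_compat; apply Rmult_le_compat_r; lra. }
    rewrite <- !exp_plus.
    unfold tt; fold h l.
    replace (h * (p * p * l + 2 * l * l) + - (l * (p * p * h + 4 * h * l))) with (-2 * ln (INR n))
      by (rewrite <- Hll; ring).
    replace (h * (p * p * - l + 2 * - l * - l) + l * (p * p * h - 4 * h * l)) with (-2 * ln (INR n))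
      by (rewrite <- Hll; ring).
    rewrite exp_m2ln by lra. lra.
  - rewrite E_const. apply Rdiv_le_0_compat; nra.
Qed.

Lemma Fb_nonneg n x : 0 <= Fb p n x.
Proof.
  unfold Fb. destruct Rle_dec; [|lra].
  pose proof (exp_pos (lam n * (sum (t_ x n) (hh n) - p * p * INR (hh n) - tt n))).
  pose proof (exp_pos (lam n * (p * p * INR (hh n) - tt n - sum (t_ x n) (hh n)))). lra.
Qed.

Lemma sum_const r m : sum (fun _ => r) m = INR m * r.
Proof. induction m; simpl sum; [simpl; ring|]. rewrite IHm, S_INR; ring. Qed.

Lemma exp_lt1 y : exp y < 1 -> y < 0.
Proof. intros H. pose proof (exp_ineq1_le y). lra. Qed.

Lemma Fb_good n x : (4 <= n)%nat -> Fb p n x < 1 ->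
  Rabs (INR (RA x n) - p * p * INR n) <= 10 * sqrt (INR n) * sqrt (ln (INR n)).
Proof.
  intros Hn HF. destruct (facts n Hn) as (H4 & Hln & H2 & Hhn & Hl & Hll & HR).
  pose proof (RA_pair x n (hh n) (hh_spec n)) as HRA.
  set (S := sum (t_ x n) (hh n)) in *.
  set (h := INR (hh n)) in *. set (l := lam n) in *.
  assert (HS : 0 <= S <= h).
  { split.
    - apply sum_nonneg; intros; unfold t_, v; destruct (_ && _)%bool; lra.
    - unfold h; rewrite <- (Rmult_1_r (INR (hh n))), <- sum_const.
      apply sum_le; intros; unfold t_, v; destruct (_ && _)%bool; lra. }
  assert (Hc : 0 <= p * p <= 1) by nra.
  assert (Ht : S - p * p * h < tt n /\ p * p * h - S < tt n).
  { unfold Fb in HF. fold S h l in HF. destruct (Rle_dec l (1/2)) as [Hle|Hgt].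
    - pose proof (exp_pos (l * (S - p * p * h - tt n))).
      pose proof (exp_pos (l * (p * p * h - tt n - S))).
      assert (A1 : l * (S - p * p * h - tt n) < 0) by (apply exp_lt1; lra).
      assert (A2 : l * (p * p * h - tt n - S) < 0) by (apply exp_lt1; lra).
      split; nra.
    - unfold tt; fold h l. split; nra. }
  assert (Htt : tt n <= 4 * (sqrt (INR n) * sqrt (ln (INR n)))).
  { unfold tt; fold h l.
    pose proof (sqrt_sqrt (INR n) ltac:(lra)). pose proof (sqrt_sqrt (ln (INR n)) ltac:(lra)).
    pose proof (sqrt_pos (INR n)). pose proof (sqrt_pos (ln (INR n))).
    set (a := sqrt (INR n)) in *. set (b := sqrt (ln (INR n))) in *.
    assert (h * l * (h * l) <= a * b * (a * b)).
    { replace (h * l * (h * l)) with (h * ln (INR n)) by (rewrite <- Hll; ring).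
      replace (a * b * (a * b)) with (INR n * ln (INR n)) by nra. nra. }
    assert (0 <= h * l) by nra. assert (0 <= a * b) by nra.
    assert (h * l <= a * b).
    { destruct (Rle_dec (h * l) (a * b)) as [|Hcc]; [auto|]. exfalso.
      assert (a * b < h * l) by lra.
      assert (a * b * (a * b) < h * l * (h * l)).
      { apply Rle_lt_trans with (a * b * (h * l)). apply Rmult_le_compat_l; lra.
        apply Rmult_lt_compat_r; lra. }
      lra. }
    lra. }
  assert (Hsq : 1 <= sqrt (INR n) * sqrt (ln (INR n))).
  { assert (1 <= sqrt (INR n)) by (rewrite <- sqrt_1; apply sqrt_le_1_alt; lra).
    assert (1 <= sqrt (ln (INR n))) by (rewrite <- sqrt_1; apply sqrt_le_1_alt; lra).
    nra. }
  rewrite Rmult_assoc. apply Rabs_le. split; nra.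
Qed.

Lemma sum_tail d : sum (fun n => if le_dec 4 n then 2 / (INR n * INR n) else 0) (4 + d)
                   <= 2/3 - 2 / (INR (4 + d) - 1).
Proof.
  induction d as [|d IH].
  - simpl sum. repeat (destruct le_dec; [lia|]). simpl. lra.
  - replace (4 + S d)%nat with (S (4 + d)) by lia.
    change (sum ?f (S ?m)) with (sum f m + f m). cbv beta.
    destruct (le_dec 4 (4 + d)) as [_|Hc]; [|lia].
    set (m := INR (4 + d)) in *.
    assert (Hm : 4 <= m) by (unfold m; replace 4 with (INR 4) by (simpl; ring); apply le_INR; lia).
    rewrite S_INR. fold m.
    assert (2 / (m * m) <= 2 / (m - 1) - 2 / (m + 1 - 1)).
    { replace (2 / (m - 1) - 2 / (m + 1 - 1)) with (2 / (m * (m - 1))) by (field; lra).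
      apply Rmult_le_compat_l; [lra|]. apply Rinv_le_contravar; nra. }
    lra.
Qed.

Lemma sum_total m : sum (fun n => if le_dec 4 n then 2 / (INR n * INR n) else 0) m <= 2/3.
Proof.
  assert (Hnn : forall j, 0 <= (if le_dec 4 j then 2 / (INR j * INR j) else 0)).
  { intros j; destruct le_dec; [|lra].
    assert (0 < INR j) by (apply lt_0_INR; lia).
    apply Rdiv_le_0_compat; nra. }
  pose proof (sum_tail m) as T.
  replace (4 + m)%nat with (m + 4)%nat in T by lia.
  rewrite sum_split in T.
  assert (0 <= sum (fun i => if le_dec 4 (m + i) then 2 / (INR (m + i) * INR (m + i)) else 0) 4)
    by (apply sum_nonneg; intros; apply Hnn).
  assert (0 < 2 / (INR (m + 4) - 1)).
  { assert (4 <= INR (m + 4)) by (replace 4 with (INR 4) by (simpl; ring); apply le_INR; lia).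
    apply Rdiv_lt_0_compat; lra. }
  lra.
Qed.

Lemma finite M : exists x, forall n, (4 <= n <= M)%nat ->
  Rabs (INR (RA x n) - p * p * INR n) <= 10 * sqrt (INR n) * sqrt (ln (INR n)).
Proof.
  set (G := fun n x => if le_dec 4 n then Fb p n x else 0).
  destruct (classic (exists x, sum (fun n => G n x) (S M) < 1)) as [[x Hx]|Hno].
  - exists x. intros n Hn. apply Fb_good; [lia|].
    assert (G n x <= sum (fun n => G n x) (S M)).
    { apply (sum_ge_term (fun n => G n x)); [|lia]. intros j _. unfold G; destruct le_dec; [apply Fb_nonneg|lra]. }
    assert (G n x = Fb p n x) by (unfold G; destruct le_dec; [reflexivity|lia]). lra.
  - exfalso.
    assert (H1 : 1 <= E p (S M) (fun x => sum (fun n => G n x) (S M))).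
    { apply E_ge; auto. intros x. apply Rnot_lt_le. intros Hc. apply Hno; eauto. }
    rewrite E_sum in H1.
    assert (sum (fun n => E p (S M) (G n)) (S M)
            <= sum (fun n => if le_dec 4 n then 2 / (INR n * INR n) else 0) (S M)).
    { apply sum_le. intros i Hi. unfold G. destruct le_dec.
      - apply EFb; lia.
      - rewrite E_const; lra. }
    pose proof (sum_total (S M)). lra.
Qed.

End Main.

Lemma RA_ext x y n : (forall i, (i <= n)%nat -> x i = y i) -> RA x n = RA y n.
Proof.
  intros H. unfold RA. f_equal. apply filter_ext_in. intros a Ha.
  apply in_seq in Ha. rewrite !H by lia. reflexivity.
Qed.

Section Konig.
Variable c : R.
Definition good M (x : nat -> bool) := forall n, (4 <= n <= M)%nat ->
  Rabs (INR (RA x n) - c * INR n) <= 10 * sqrt (INR n) * sqrt (ln (INR n)).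

Hypothesis fin : forall M, exists x, good M x.

Definition extd k (g : nat -> bool) := forall M, exists x, (forall i, (i < k)%nat -> x i = g i) /\ good M x.

Lemma extd_step k g : extd k g -> extd (S k) (upd g k true) \/ extd (S k) (upd g k false).
Proof.
  intros H. apply NNPP. intros Hn. apply not_or_and in Hn. destruct Hn as [H1 H2].
  apply not_all_ex_not in H1, H2. destruct H1 as [M1 H1], H2 as [M2 H2].
  destruct (H (Nat.max M1 M2)) as [x [Hx Hg]].
  assert (Hg1 : good M1 x) by (intros n Hn; apply Hg; lia).
  assert (Hg2 : good M2 x) by (intros n Hn; apply Hg; lia).
  destruct (x k) eqn:Hk.
  - apply H1. exists x. split; auto. intros i Hi. unfold upd.
    destruct (Nat.eqb_spec i k); subst; auto. apply Hx; lia.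
  - apply H2. exists x. split; auto. intros i Hi. unfold upd.
    destruct (Nat.eqb_spec i k); subst; auto. apply Hx; lia.
Qed.

Fixpoint gs (k : nat) : nat -> bool :=
  match k with
  | O => fun _ => false
  | S k' => if excluded_middle_informative (extd (S k') (upd (gs k') k' true))
            then upd (gs k') k' true else upd (gs k') k' false
  end.

Lemma gs_extd k : extd k (gs k).
Proof.
  induction k as [|k IH].
  - intros M. destruct (fin M) as [x Hx]. exists x. split; auto. intros; lia.
  - simpl. destruct excluded_middle_informative as [E|E]; auto.
    destruct (extd_step k (gs k) IH); tauto.
Qed.

Definition Alim i := gs (S i) i.

Lemma gs_Alim k i : (i < k)%nat -> gs k i = Alim i.
Proof.
  induction k as [|k IH]; intros Hi; [lia|].
  destruct (Nat.eq_dec i k) as [->|Hne]; [reflexivity|].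
  simpl. destruct excluded_middle_informative; rewrite upd_neq by auto; apply IH; lia.
Qed.

Lemma Alim_good M : good M Alim.
Proof.
  destruct (gs_extd (S M) M) as [x [Hx Hg]].
  intros n Hn. rewrite (RA_ext Alim x n).
  - apply Hg; auto.
  - intros i Hi. rewrite Hx, gs_Alim by lia. reflexivity.
Qed.
End Konig.

Theorem theorem12 (c : R) (hc0 : 0 < c) (hc1 : c < 1) :
  exists A : nat -> bool,
    exists K : R, exists N : nat,
      forall n : nat, (N <= n)%nat ->
        Rabs (INR (RA A n) - c * INR n) <= K * sqrt (INR n) * sqrt (ln (INR n)).
Proof.
  set (p := sqrt c).
  assert (Hp : 0 <= p <= 1).
  { split; [apply sqrt_pos|]. unfold p; rewrite <- sqrt_1; apply sqrt_le_1_alt; lra. }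
  assert (Hc : p * p = c) by (apply sqrt_sqrt; lra).
  assert (fin : forall M, exists x, good c M x).
  { intros M. destruct (finite p Hp M) as [x Hx]. exists x. intros n Hn. rewrite <- Hc. apply Hx; auto. }
  exists (Alim c), 10, 4%nat. intros n Hn. apply (Alim_good c fin n). lia.
Qed.
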